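(* In the setting described in the context (Schrödinger equation with short-range potential, bases $(g_n,\bar g_n)$ on the classically allowed intervals, transfer matrices $T_n$, and the quantum walk on $[n_0]$ with coins $U_n:=\mathcal{M}(T_n)$), the scattering matrix of the Schrödinger equation coincides with that of the quantum walk: $\mathbb{S}_{\mathrm{QM}}=\mathbb{S}_{\mathrm{QW}}$.
   Context: Schrödinger side. Let $h>0$ and $P(h)=-h^2\frac{d^2}{dx^2}+V(x)$ on $\mathbb{R}$, with $V$ continuous, real-valued, and satisfying $|V(x)|\le C(1+|x|)^{-1-\epsilon}$ for some $C,\epsilon>0$. Fix $0<\lambda_0\le\lambda_1$ and $\lambda\in[\lambda_0,\lambda_1]$. The Jost solutions $J^\pm_{\mathrm{in}},J^\pm_{\mathrm{out}}$ of $(P-\lambda)\varphi=0$ are characterized by $e^{i\sqrt\lambda|x|/h}J^\pm_{\mathrm{in}}(x)\to1$, $e^{-i\sqrt\lambda|x|/h}J^\pm_{\mathrm{out}}(x)\to1$ as $x\to\pm\infty$. The scattering matrix $\mathbb{S}_{\mathrm{QM}}$ is the $2\times2$ matrix with $(J^+_{\mathrm{in}},J^-_{\mathrm{in}})=(J^-_{\mathrm{out}},J^+_{\mathrm{out}})\,\mathbb{S}_{\mathrm{QM}}$. The set $\{x: V(x)\ge\lambda_0\}$ is a finite union of closed intervals $K_n=[x_{2n-1},x_{2n}]$, $n=1,\dots,n_0$, with $x_1<x_2<\dots<x_{2n_0}$ and $n_0\ge2$; set $I_0=(-\infty,x_1)$, $I_n=(x_{2n},x_{2n+1})$ for $1\le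 n\le n_0-1$, $I_{n_0}=(x_{2n_0},\infty)$. For each $n=0,\dots,n_0$ let $g_n$ be a solution of $(P-\lambda)g=0$ on $\mathbb{R}$ (associated with $I_n$) such that $(g_n,\bar g_n)$ is a basis of solutions, with $g_0=J^-_{\mathrm{out}}$, $g_{n_0}=J^+_{\mathrm{in}}$, the Wronskian $\mathcal{W}(g_n,\bar g_n)$ independent of $n$, and $(g_{n-1},\bar g_n)$ linearly independent for each $n$. Define $T_n$ ($1\le n\le n_0$) by $(g_{n-1},\bar g_{n-1})T_n=(g_n,\bar g_n)$; then $T_n\in\mathcal{T}:=\{T=(t_{jk})\in SL(2,\mathbb{C}): t_{11}=\overline{t_{22}},\ t_{12}=\overline{t_{21}}\}$. Define $\mathcal{M}:\mathcal{T}\to\mathcal{S}:=\{M\in U(2): m_{11}=m_{22}\neq0\}$ by $\mathcal{M}\begin{pmatrix}p&\bar q\\ q&\bar p\end{pmatrix}=\frac1{\bar p}\begin{pmatrix}1&\bar q\\-q&1\end{pmatrix}$, and $U_n:=\mathcal{M}(T_n)$. Quantum walk on $[n_0]=\{1,\dots,n_0\}$. Set $P_n:=\begin{pmatrix}1&0\\0&0\end{pmatrix}U_n$, $Q_n:=\begin{pmatrix}0&0\\0&1\end{pmatrix}U_n$. A state $\Psi$ consists of $\Psi(n)=(\Psi_1(n),\Psi_2(n))^T\in\mathbb{C}^2$ for $1\le n\le n_0$ and scalars $\Psi(-\infty),\Psi(+\infty)\in\mathbb{C}$ (so the state space is $\mathbb{C}^{2n_0+2}$). The evolution $\mathcal{U}$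 is: $(\mathcal{U}\Psi)(n)=P_{n+1}\Psi(n+1)+Q_{n-1}\Psi(n-1)$ for $2\le n\le n_0-1$; $(\mathcal{U}\Psi)(-\infty)=(1,0)U_1\Psi(1)$; $(\mathcal{U}\Psi)(+\infty)=(0,1)U_{n_0}\Psi(n_0)$; $(\mathcal{U}\Psi)(1)=P_2\Psi(2)+(0,\Psi_2(1))^T$; $(\mathcal{U}\Psi)(n_0)=(\Psi_1(n_0),0)^T+Q_{n_0-1}\Psi(n_0-1)$. Let $\Psi^\pm_{\mathrm{in}},\Psi^\pm_{\mathrm{out}}$ be the (unique) states with $\mathcal{U}\Psi=\Psi$ and: $(\Psi^-_{\mathrm{in}})_2(1)=1,\ \Psi^-_{\mathrm{in}}(-\infty)=0$; $(\Psi^-_{\mathrm{out}})_2(1)=0,\ \Psi^-_{\mathrm{out}}(-\infty)=1$; $(\Psi^+_{\mathrm{in}})_1(n_0)=1,\ \Psi^+_{\mathrm{in}}(+\infty)=0$; $(\Psi^+_{\mathrm{out}})_1(n_0)=0,\ \Psi^+_{\mathrm{out}}(+\infty)=1$. The scattering matrix $\mathbb{S}_{\mathrm{QW}}$ is the $2\times2$ matrix with $(\Psi^+_{\mathrm{in}},\Psi^-_{\mathrm{in}})=(\Psi^-_{\mathrm{out}},\Psi^+_{\mathrm{out}})\,\mathbb{S}_{\mathrm{QW}}$. *)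

(* Defs.v *)
From Stdlib Require Import Reals.
From Coquelicot Require Import Coquelicot.
Open Scope C_scope.

Definition cexpi (theta : R) : C := (cos theta, sin theta).

Definition is_sol (h : R) (V : R -> R) (lam : R) (f : R -> C) : Prop :=
  exists f1 f2 : R -> C,
    forall x : R,
      is_derive f x (f1 x) /\ is_derive f1 x (f2 x) /\
      - RtoC (h ^ 2) * f2 x + RtoC (V x - lam) * f x = 0.

Definition cconjf (f : R -> C) : R -> C := fun x => Cconj (f x).

Definition lin_indep (f g : R -> C) : Prop :=
  forall a b : C, (forall x, a * f x + b * g x = 0) -> a = 0 /\ b = 0.

Definition sol_basis h V lam (f g : R -> C) : Prop :=
  is_sol h V lam f /\ is_sol h V lam g /\ lin_indep f g /\
  (forall u, is_sol h V lam u -> exists a b : C, forall x, u x = a * f x + b * g x).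

Definition wronskian_is (f g : R -> C) (w : C) : Prop :=
  exists f1 g1 : R -> C,
    forall x, is_derive f x (f1 x) /\ is_derive g x (g1 x) /\
              f x * g1 x - f1 x * g x = w.

(* e^{s i sqrt(lam)|x|/h} J(x) -> 1 as x -> +oo (pl = true) or -oo (pl = false);
   s = +1 for "in" solutions, s = -1 for "out" solutions. *)
Definition jost_asym (h lam : R) (s : R) (pl : bool) (J : R -> C) : Prop :=
  filterlim (fun x => cexpi (s * sqrt lam * Rabs x / h) * J x)
    (Rbar_locally (if pl then p_infty else m_infty)) (locally (RtoC 1)).

Record M2 := mkM2 { m11 : C; m12 : C; m21 : C; m22 : C }.

Definition mulv (A : M2) (v : C * C) : C * C :=
  (m11 A * fst v + m12 A * snd v, m21 A * fst v + m22 A * snd v).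

(* The map M : T -> S,  M [[p, qbar],[q, pbar]] = 1/pbar [[1, qbar],[-q, 1]].
   Here p = t11, q = t21 and qbar = conj q (= t12 on T). *)
Definition Mmap (T : M2) : M2 :=
  let p := m11 T in let q := m21 T in
  mkM2 (/ Cconj p) (/ Cconj p * Cconj q) (/ Cconj p * (- q)) (/ Cconj p).

(* Quantum-walk states: Psi(n) for 1 <= n <= n0 (values outside are irrelevant),
   Psi(-oo), Psi(+oo). *)
Record qw_state := mkQW { qv : nat -> C * C; qminf : C; qpinf : C }.

Definition Pm (U : M2) (v : C * C) : C * C := (fst (mulv U v), RtoC 0).
Definition Qm (U : M2) (v : C * C) : C * C := (RtoC 0, snd (mulv U v)).
Definition addv (v w : C * C) : C * C := (fst v + fst w, snd v + snd w).

Definition qw_fixed (n0 : nat) (Uc : nat -> M2) (Psi : qw_state) : Prop :=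
  (forall n, (2 <= n <= n0 - 1)%nat ->
     qv Psi n = addv (Pm (Uc (S n)) (qv Psi (S n))) (Qm (Uc (n - 1)%nat) (qv Psi (n - 1)%nat))) /\
  qminf Psi = fst (mulv (Uc 1%nat) (qv Psi 1%nat)) /\
  qpinf Psi = snd (mulv (Uc n0) (qv Psi n0)) /\
  qv Psi 1%nat = addv (Pm (Uc 2%nat) (qv Psi 2%nat)) (RtoC 0, snd (qv Psi 1%nat)) /\
  qv Psi n0 = addv (fst (qv Psi n0), RtoC 0) (Qm (Uc (n0 - 1)%nat) (qv Psi (n0 - 1)%nat)).

Definition qw_lincomb (n0 : nat) (Psi : qw_state) (a : C) (Phi1 : qw_state)
  (b : C) (Phi2 : qw_state) : Prop :=
  (forall n, (1 <= n <= n0)%nat ->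
     qv Psi n = addv (a * fst (qv Phi1 n), a * snd (qv Phi1 n))
                     (b * fst (qv Phi2 n), b * snd (qv Phi2 n))) /\
  qminf Psi = a * qminf Phi1 + b * qminf Phi2 /\
  qpinf Psi = a * qpinf Phi1 + b * qpinf Phi2.

(* Main.v *)
Require Import Defs.
From Stdlib Require Import Reals Lra Lia.
From Coquelicot Require Import Coquelicot.
Open Scope C_scope.

Lemma der_fst (f : R -> C) x l : is_derive f x l -> is_derive (fun t => fst (f t)) x (fst l).
Proof.
  intro H. unfold is_derive in *.
  apply (filterdiff_comp' f (fun z : prod_NormedModule R_AbsRing R_NormedModule R_NormedModule => fst z) x _ (fun z => fst z) H).
  apply filterdiff_linear, is_linear_fst.
Qed.
Lemma der_snd (f : R -> C) x l : is_derive f x l -> is_derive (fun t => snd (f t)) x (snd l).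
Proof.
  intro H. unfold is_derive in *.
  apply (filterdiff_comp' f (fun z : prod_NormedModule R_AbsRing R_NormedModule R_NormedModule => snd z) x _ (fun z => snd z) H).
  apply filterdiff_linear, is_linear_snd.
Qed.
Lemma derR_uniq (f : R -> R) x l1 l2 : is_derive f x l1 -> is_derive f x l2 -> l1 = l2.
Proof. intros H1 H2. apply is_derive_unique in H1. apply is_derive_unique in H2. congruence. Qed.
Lemma derR_ext (f g : R -> R) x l : (forall t, f t = g t) -> is_derive f x l -> is_derive g x l.
Proof. intros E H. apply is_derive_ext with f; auto. Qed.

Ltac cdes := repeat match goal with z : C |- _ => destruct z end.

Lemma der_comb (G F : R -> C) x gx fx p q : is_derive G x gx -> is_derive F x fx ->
  (forall t, F t = p * G t + q * Cconj (G t)) -> fx = p * gx + q * Cconj gx.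
Proof.
  intros HG HF E.
  pose proof (der_fst _ _ _ HG) as G1. pose proof (der_snd _ _ _ HG) as G2.
  pose proof (der_fst _ _ _ HF) as F1. pose proof (der_snd _ _ _ HF) as F2.
  destruct p as [p1 p2], q as [q1 q2].
  assert (A1 : is_derive (fun t => fst (F t)) x ((p1+q1) * fst gx + (q2-p2) * snd gx)%R).
  { apply derR_ext with (fun t => ((p1+q1) * fst (G t) + (q2-p2) * snd (G t))%R).
    - intro t. rewrite E. destruct (G t). simpl. ring.
    - apply (@is_derive_plus R_AbsRing R_NormedModule); apply is_derive_scal; auto. }
  assert (A2 : is_derive (fun t => snd (F t)) x ((p2+q2) * fst gx + (p1-q1) * snd gx)%R).
  { apply derR_ext with (fun t => ((p2+q2) * fst (G t) + (p1-q1) * snd (G t))%R).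
    - intro t. rewrite E. destruct (G t). simpl. ring.
    - apply (@is_derive_plus R_AbsRing R_NormedModule); apply is_derive_scal; auto. }
  pose proof (derR_uniq _ _ _ _ F1 A1). pose proof (derR_uniq _ _ _ _ F2 A2).
  destruct fx, gx. simpl in *. apply injective_projections; simpl; subst; ring.
Qed.

Definition tseq (k c : R) (n : nat) : R := ((c + 2 * INR n * PI) / k)%R.

Lemma tseq_lim k c : (0 < k)%R -> is_lim_seq (tseq k c) p_infty.
Proof.
  intro Hk. apply is_lim_seq_spec. intro M.
  pose proof (proj2 (is_lim_seq_spec INR p_infty) is_lim_seq_INR ((M * k - c) / (2 * PI))%R) as HN.
  destruct HN as [N HN]. exists N. intros n Hn. specialize (HN n Hn). simpl in HN.
  unfold tseq. pose proof PI_RGT_0.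
  apply Rmult_lt_reg_r with k; auto. unfold Rdiv. rewrite Rmult_assoc, Rinv_l by lra.
  apply Rmult_lt_compat_r with (r := (2 * PI)%R) in HN; [|lra].
  unfold Rdiv in HN. rewrite Rmult_assoc, Rinv_l in HN by lra. lra.
Qed.

Lemma tseq_nonneg k c n : (0 < k)%R -> (0 <= c)%R -> (0 <= tseq k c n)%R.
Proof.
  intros Hk Hc. unfold tseq. pose proof PI_RGT_0. pose proof (pos_INR n).
  apply Rmult_le_pos. nra. left. apply Rinv_0_lt_compat; auto.
Qed.

Lemma tseq_mul k c n : (0 < k)%R -> (k * tseq k c n = c + 2 * INR n * PI)%R.
Proof. intro. unfold tseq. field. lra. Qed.

Lemma filt_fst (F : nat -> C) a b : filterlim F eventually (locally ((a, b) : C)) -> is_lim_seq (fun n => fst (F n)) a /\ is_lim_seq (fun n => snd (F n)) b.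
Proof.
  intro H. split; apply is_lim_seq_spec; intro eps;
  destruct (proj1 (filterlim_locally F _) H eps) as [N HN]; exists N; intros n Hn;
  destruct (HN n Hn) as [H1 H2]; [exact H1 | exact H2].
Qed.

Definition xseq (k c : R) (pl : bool) (n : nat) : R := if pl then tseq k c n else (- tseq k c n)%R.

Lemma cexpi_per s c n : (s = 1 \/ s = -1)%R -> cexpi (s * (c + 2 * INR n * PI)) = cexpi (s * c).
Proof.
  intros [-> | ->]; unfold cexpi.
  - rewrite !Rmult_1_l, cos_period, sin_period; auto.
  - replace (-1 * (c + 2 * INR n * PI))%R with (- (c + 2 * INR n * PI))%R by ring.
    replace (-1 * c)%R with (- c)%R by ring.
    rewrite !cos_neg, !sin_neg, cos_period, sin_period; auto.
Qed.

Lemma jost_seq h lam s pl J c : (0 < h)%R -> (0 < lam)%R -> (0 <= c)%R -> (s = 1 \/ s = -1)%R ->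
  jost_asym h lam s pl J ->
  filterlim (fun n => cexpi (s * c) * J (xseq (sqrt lam / h) c pl n)) eventually (locally (RtoC 1)).
Proof.
  intros Hh Hl Hc Hs HJ. unfold jost_asym in HJ.
  assert (Hk : (0 < sqrt lam / h)%R) by (apply Rdiv_lt_0_compat; auto; apply sqrt_lt_R0; auto).
  assert (Lx : filterlim (xseq (sqrt lam / h) c pl) eventually (Rbar_locally (if pl then p_infty else m_infty))).
  { destruct pl; unfold xseq.
    - apply tseq_lim; auto.
    - apply (is_lim_seq_opp (tseq _ c) p_infty). apply tseq_lim; auto. }
  pose proof (filterlim_comp _ _ _ _ _ _ _ _ Lx HJ) as L.
  eapply filterlim_ext; [|exact L]. intro n. simpl. f_equal.
  assert (E : Rabs (xseq (sqrt lam / h) c pl n) = tseq (sqrt lam / h) c n).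
  { pose proof (tseq_nonneg _ c n Hk Hc). destruct pl; unfold xseq.
    - apply Rabs_right; lra.
    - rewrite Rabs_Ropp. apply Rabs_right; lra. }
  rewrite E. rewrite <- (cexpi_per s c n Hs). f_equal.
  rewrite <- (tseq_mul (sqrt lam / h) c n Hk). field. lra.
Qed.

Lemma lin2 (a b : nat -> R) (A B u v : R) : is_lim_seq a A -> is_lim_seq b B ->
  is_lim_seq (fun n => u * a n + v * b n)%R (u * A + v * B)%R.
Proof.
  intros Ha Hb. apply is_lim_seq_plus'.
  - apply (is_lim_seq_scal_l a u (Finite A) Ha).
  - apply (is_lim_seq_scal_l b v (Finite B) Hb).
Qed.

Lemma lim_uniq (u : nat -> R) (a b : R) : is_lim_seq u a -> is_lim_seq u b -> a = b.
Proof. intros H1 H2. apply is_lim_seq_unique in H1. apply is_lim_seq_unique in H2.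
  rewrite H1 in H2. injection H2. auto. Qed.

Lemma lim_lin (J : nat -> C) (A B : R) P Q : is_lim_seq (fun n => fst (J n)) A -> is_lim_seq (fun n => snd (J n)) B ->
  is_lim_seq (fun n => fst (P * J n + Q * Cconj (J n))) (fst (P * (A, B) + Q * Cconj (A, B))) /\
  is_lim_seq (fun n => snd (P * J n + Q * Cconj (J n))) (snd (P * (A, B) + Q * Cconj (A, B))).
Proof.
  intros HA HB. destruct P as [p1 p2], Q as [q1 q2]. split.
  - replace (fst ((p1, p2) * (A, B) + (q1, q2) * Cconj (A, B))) with ((p1+q1) * A + (q2-p2) * B)%R by (unfold Cplus, Cmult, Cconj; simpl; ring).
    eapply is_lim_seq_ext; [| apply (lin2 _ _ _ _ (p1+q1)%R (q2-p2)%R HA HB)].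
    intro n. cbv beta. destruct (J n); unfold Cplus, Cmult, Cconj; simpl; ring.
  - replace (snd ((p1, p2) * (A, B) + (q1, q2) * Cconj (A, B))) with ((p2+q2) * A + (p1-q1) * B)%R by (unfold Cplus, Cmult, Cconj; simpl; ring).
    eapply is_lim_seq_ext; [| apply (lin2 _ _ _ _ (p2+q2)%R (p1-q1)%R HA HB)].
    intro n. cbv beta. destruct (J n); unfold Cplus, Cmult, Cconj; simpl; ring.
Qed.

Lemma cexpi_norm c : Cconj (cexpi c) * cexpi c = RtoC 1.
Proof.
  unfold cexpi, Cconj, Cmult, RtoC; simpl. pose proof (sin2_cos2 c). unfold Rsqr in H.
  apply injective_projections; simpl; nra.
Qed.

Lemma cexpi_m1 c : cexpi (-1 * c) = Cconj (cexpi c).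
Proof. unfold cexpi, Cconj. replace (-1*c)%R with (-c)%R by ring. rewrite cos_neg, sin_neg. reflexivity. Qed.

Lemma cexpi_1 c : cexpi (1 * c) = cexpi c.
Proof. rewrite Rmult_1_l. reflexivity. Qed.

Lemma jost_core h lam pl Jin Jout al be c : (0 < h)%R -> (0 < lam)%R -> (0 <= c)%R ->
  jost_asym h lam 1 pl Jin -> jost_asym h lam (-1) pl Jout ->
  (forall x, Jout x = al * Jin x + be * Cconj (Jin x)) ->
  Cconj (cexpi c) * (al * Cconj (cexpi c) + be * cexpi c) = RtoC 1.
Proof.
  intros Hh Hl Hc H1 H2 E.
  set (x := xseq (sqrt lam / h) c pl).
  set (K := cexpi c).
  pose proof (jost_seq h lam 1 pl Jin c Hh Hl Hc (or_introl eq_refl) H1) as L1.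
  pose proof (jost_seq h lam (-1) pl Jout c Hh Hl Hc (or_intror eq_refl) H2) as L2.
  fold x in L1, L2. rewrite cexpi_1 in L1. rewrite cexpi_m1 in L2. fold K in L1, L2.
  apply filt_fst in L1. destruct L1 as [L1a L1b].
  destruct (lim_lin (fun n => K * Jin (x n)) 1 0 (Cconj K) 0 L1a L1b) as [M1 M2].
  assert (EJ : forall n, Cconj K * (K * Jin (x n)) + 0 * Cconj (K * Jin (x n)) = Jin (x n)).
  { intro n. pose proof (cexpi_norm c) as N. fold K in N.
    rewrite Cmult_assoc, N. destruct (Jin (x n)). destruct K. unfold Cplus, Cmult, Cconj, RtoC in *. simpl. apply injective_projections; simpl; ring. }
  assert (A1 : is_lim_seq (fun n => fst (Jin (x n))) (fst (Cconj K * (1, 0) + 0 * Cconj (1, 0)))).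
  { eapply is_lim_seq_ext; [|exact M1]. intro n. cbv beta. rewrite EJ. reflexivity. }
  assert (A2 : is_lim_seq (fun n => snd (Jin (x n))) (snd (Cconj K * (1, 0) + 0 * Cconj (1, 0)))).
  { eapply is_lim_seq_ext; [|exact M2]. intro n. cbv beta. rewrite EJ. reflexivity. }
  destruct (lim_lin (fun n => Jin (x n)) _ _ (Cconj K * al) (Cconj K * be) A1 A2) as [B1 B2].
  apply filt_fst in L2. destruct L2 as [L2a L2b].
  assert (EO : forall n, Cconj K * Jout (x n) = Cconj K * al * Jin (x n) + Cconj K * be * Cconj (Jin (x n))).
  { intro n. rewrite E. destruct (Jin (x n)), K, al, be. unfold Cplus, Cmult, Cconj. simpl. apply injective_projections; simpl; ring. }
  assert (F1 := lim_uniq _ _ _ L2a (is_lim_seq_ext _ _ _ (fun n => f_equal fst (eq_sym (EO n))) B1)).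
  assert (F2 := lim_uniq _ _ _ L2b (is_lim_seq_ext _ _ _ (fun n => f_equal snd (eq_sym (EO n))) B2)).
  clearbody K. destruct K as [k1 k2], al as [a1 a2], be as [b1 b2].
  unfold Cplus, Cmult, Cconj, RtoC in *; simpl in *.
  apply injective_projections; simpl; [rewrite F1 | rewrite F2]; ring.
Qed.

Lemma jost_uniq h lam pl Jin Jout al be : (0 < h)%R -> (0 < lam)%R ->
  jost_asym h lam 1 pl Jin -> jost_asym h lam (-1) pl Jout ->
  (forall x, Jout x = al * Jin x + be * Cconj (Jin x)) ->
  forall x, Jout x = Cconj (Jin x).
Proof.
  intros Hh Hl H1 H2 E.
  pose proof (jost_core h lam pl Jin Jout al be 0 Hh Hl (Rle_refl _) H1 H2 E) as C0.
  assert (Hp : (0 <= PI/2)%R) by (pose proof PI_RGT_0; lra).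
  pose proof (jost_core h lam pl Jin Jout al be (PI/2) Hh Hl Hp H1 H2 E) as C1.
  unfold cexpi in C0, C1. rewrite cos_0, sin_0 in C0. rewrite cos_PI2, sin_PI2 in C1.
  destruct al as [a1 a2], be as [b1 b2].
  unfold Cplus, Cmult, Cconj, RtoC in C0, C1. simpl in C0, C1.
  injection C0; injection C1; intros e1 e2 e3 e4.
  assert (a1 = 0 /\ a2 = 0 /\ b1 = 1 /\ b2 = 0)%R as [? [? [? ?]]] by lra. subst.
  intro x. rewrite E. destruct (Jin x). unfold Cplus, Cmult, Cconj; simpl.
  apply injective_projections; simpl; ring.
Qed.

Lemma pick k c M : (0 < k)%R -> exists n, (M < tseq k c n)%R.
Proof.
  intro Hk. destruct (proj2 (is_lim_seq_spec _ _) (tseq_lim k c Hk) M) as [N HN].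
  exists N. apply HN. lia.
Qed.

Lemma phase_at h lam J c n : (0 < h)%R -> (0 < lam)%R -> (0 <= c)%R ->
  cexpi (1 * sqrt lam * Rabs (tseq (sqrt lam / h) c n) / h) * J (tseq (sqrt lam / h) c n)
  = cexpi c * J (tseq (sqrt lam / h) c n).
Proof.
  intros Hh Hl Hc.
  assert (Hk : (0 < sqrt lam / h)%R) by (apply Rdiv_lt_0_compat; auto; apply sqrt_lt_R0; auto).
  f_equal. rewrite Rabs_right by (apply Rle_ge, tseq_nonneg; auto).
  rewrite <- (cexpi_1 c). rewrite <- (cexpi_per 1 c n (or_introl eq_refl)). f_equal.
  rewrite <- (tseq_mul (sqrt lam / h) c n Hk). field. lra.
Qed.

Lemma wr_nonzero h lam J w : (0 < h)%R -> (0 < lam)%R ->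
  jost_asym h lam 1 true J -> wronskian_is J (cconjf J) w -> w <> RtoC 0.
Proof.
  intros Hh Hl HJ [f1 [g1 HW]] Hw0.
  assert (Hk : (0 < sqrt lam / h)%R) by (apply Rdiv_lt_0_compat; auto; apply sqrt_lt_R0; auto).
  assert (G1 : forall x, g1 x = 0 * f1 x + 1 * Cconj (f1 x)).
  { intro x. destruct (HW x) as [D1 [D2 _]].
    apply (der_comb J (cconjf J) x (f1 x) (g1 x) 0 1 D1 D2).
    intro t. unfold cconjf. destruct (J t). unfold Cplus, Cmult, Cconj; simpl. apply injective_projections; simpl; ring. }
  set (a := fun t => fst (J t)). set (b := fun t => snd (J t)).
  assert (Cross : forall x, (b x * fst (f1 x) - a x * snd (f1 x) = 0)%R).
  { intro x. destruct (HW x) as [_ [_ W]]. rewrite G1, Hw0 in W. unfold cconjf in W. unfold a, b.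
    destruct (J x), (f1 x). unfold Cplus, Cmult, Cminus, Copp, Cconj, RtoC in W. simpl in W |- *.
    injection W. intros W1 W2. nra. }
  unfold jost_asym in HJ.
  destruct (proj1 (filterlim_locally _ _) HJ (mkposreal (1/2) ltac:(lra))) as [M HM].
  simpl in HM.
  assert (NZ : forall x, (M < x)%R -> (0 < a x * a x + b x * b x)%R).
  { intros x Hx. destruct (HM x Hx) as [B1 B2]. unfold a, b.
    destruct (Req_dec (fst (J x)) 0) as [E1|E1]; [destruct (Req_dec (snd (J x)) 0) as [E2|E2]|].
    - exfalso. simpl in B1. unfold AbsRing_ball, abs, minus, plus, opp in B1. simpl in B1.
      destruct (J x) as [u v]. simpl in E1, E2. subst. unfold Cmult in B1. simpl in B1.
      replace (cos (1 * sqrt lam * Rabs x / h) * 0 - sin (1 * sqrt lam * Rabs x / h) * 0)%R with 0%R in B1 by ring. unfold ball in B1; simpl in B1. unfold AbsRing_ball, abs, minus, plus, opp in B1; simpl in B1. rewrite Rabs_left in B1; lra.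
    - nra.
    - nra. }
  set (phi := fun t => (a t / sqrt (a t * a t + b t * b t))%R).
  assert (D0 : forall t, (M < t)%R -> is_derive phi t 0%R).
  { intros t Ht. destruct (HW t) as [D1 _].
    pose proof (der_fst _ _ _ D1) as Da. pose proof (der_snd _ _ _ D1) as Db.
    fold a in Da. fold b in Db. pose proof (NZ t Ht) as Nt.
    assert (DN : is_derive (fun t => (a t * a t + b t * b t)%R) t
       ((fst (f1 t) * a t + a t * fst (f1 t)) + (snd (f1 t) * b t + b t * snd (f1 t)))%R).
    { apply (@is_derive_plus R_AbsRing R_NormedModule); apply Derive.is_derive_mult; auto. }
    pose proof (is_derive_sqrt _ _ _ DN Nt) as DS.
    assert (Sp : (0 < sqrt (a t * a t + b t * b t))%R) by (apply sqrt_lt_R0; auto).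
    pose proof (is_derive_div _ _ _ _ _ Da DS ltac:(lra)) as DD.
    unfold phi. eapply is_derive_ext; [intro; reflexivity|].
    replace 0%R with ((fst (f1 t) * sqrt (a t * a t + b t * b t) -
        a t * ((fst (f1 t) * a t + a t * fst (f1 t) + (snd (f1 t) * b t + b t * snd (f1 t))) /
          (2 * sqrt (a t * a t + b t * b t)))) / sqrt (a t * a t + b t * b t) ^ 2)%R.
    exact DD.
    set (s := sqrt (a t * a t + b t * b t)) in *.
    assert (Ss : (s * s = a t * a t + b t * b t)%R) by (apply sqrt_sqrt; lra).
    pose proof (Cross t) as Ct.
    replace ((fst (f1 t) * s - a t * ((fst (f1 t) * a t + a t * fst (f1 t) + (snd (f1 t) * b t + b t * snd (f1 t))) / (2 * s))) / s ^ 2)%R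
      with ((fst (f1 t) * (s * s) - a t * (a t * fst (f1 t) + b t * snd (f1 t))) / (s * s * s))%R by (field; lra).
    rewrite Ss. replace (fst (f1 t) * (a t * a t + b t * b t) - a t * (a t * fst (f1 t) + b t * snd (f1 t)))%R
      with (b t * (b t * fst (f1 t) - a t * snd (f1 t)))%R by ring.
    rewrite Ct. unfold Rdiv. ring. }
  destruct (pick (sqrt lam / h) 0 (Rmax M 0) Hk) as [n1 Hn1].
  set (t1 := tseq (sqrt lam / h) 0 n1) in *.
  destruct (pick (sqrt lam / h) PI t1 Hk) as [n2 Hn2].
  set (t2 := tseq (sqrt lam / h) PI n2) in *.
  assert (HM1 : (M < t1)%R) by (pose proof (Rmax_l M 0); lra).
  assert (HM2 : (M < t2)%R) by lra.
  assert (Eq : phi t1 = phi t2).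
  { apply (eq_is_derive phi t1 t2); [|lra]. intros t Ht. apply D0. lra. }
  assert (P1 : (a t1 > 1/2)%R).
  { destruct (HM t1 HM1) as [B1 _]. unfold t1 in B1. rewrite phase_at in B1 by lra.
    unfold cexpi in B1. rewrite cos_0, sin_0 in B1. fold t1 in B1. unfold a.
    unfold ball in B1; simpl in B1. unfold AbsRing_ball, abs, minus, plus, opp in B1. simpl in B1.
    destruct (J t1) as [u v]. unfold Cmult in B1; simpl in B1 |- *.
    apply Rabs_def2 in B1. lra. }
  assert (P2 : (a t2 < -1/2)%R).
  { destruct (HM t2 HM2) as [B1 _]. unfold t2 in B1. rewrite phase_at in B1 by (pose proof PI_RGT_0; lra).
    unfold cexpi in B1. rewrite cos_PI, sin_PI in B1. fold t2 in B1. unfold a.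
    unfold ball in B1; simpl in B1. unfold AbsRing_ball, abs, minus, plus, opp in B1. simpl in B1.
    destruct (J t2) as [u v]. unfold Cmult in B1; simpl in B1 |- *.
    apply Rabs_def2 in B1. lra. }
  unfold phi in Eq.
  assert (S1 : (0 < sqrt (a t1 * a t1 + b t1 * b t1))%R) by (apply sqrt_lt_R0; apply NZ; lra).
  assert (S2 : (0 < sqrt (a t2 * a t2 + b t2 * b t2))%R) by (apply sqrt_lt_R0; apply NZ; lra).
  assert (Q1 : (0 < a t1 / sqrt (a t1 * a t1 + b t1 * b t1))%R) by (apply Rdiv_lt_0_compat; lra).
  assert (Q2 : (a t2 / sqrt (a t2 * a t2 + b t2 * b t2) < 0)%R).
  { unfold Rdiv. apply Rmult_neg_pos; [lra|]. apply Rinv_0_lt_compat; lra. }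
  lra.
Qed.

Definition nrm (z : C) : R := (fst z * fst z + snd z * snd z)%R.

Lemma T_struct (g1 g2 : R -> C) (t11 t12 t21 t22 : C) :
  lin_indep g1 (cconjf g1) ->
  (forall x, g2 x = t11 * g1 x + t21 * cconjf g1 x /\ cconjf g2 x = t12 * g1 x + t22 * cconjf g1 x) ->
  t12 = Cconj t21 /\ t22 = Cconj t11.
Proof.
  intros HL HR.
  destruct (HL (t12 - Cconj t21) (t22 - Cconj t11)) as [E1 E2].
  { intro x. destruct (HR x) as [R1 R2]. unfold cconjf in *. rewrite R1 in R2.
    destruct (g1 x), t11, t12, t21, t22. unfold Cplus, Cmult, Cminus, Copp, Cconj, RtoC in *. simpl in *.
    injection R2; intros e1 e2. apply injective_projections; simpl; nra. }
  split.
  - destruct t12, t21. unfold Cminus, Cplus, Copp, Cconj, RtoC in *. injection E1; intros. apply injective_projections; simpl; lra.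
  - destruct t22, t11. unfold Cminus, Cplus, Copp, Cconj, RtoC in *. injection E2; intros. apply injective_projections; simpl; lra.
Qed.

Lemma det_one (g1 g2 : R -> C) (p q w : C) :
  w <> RtoC 0 ->
  wronskian_is g1 (cconjf g1) w -> wronskian_is g2 (cconjf g2) w ->
  (forall x, g2 x = p * g1 x + q * cconjf g1 x) ->
  (nrm p - nrm q = 1)%R.
Proof.
  intros Hw [f1 [h1 W1]] [f2 [h2 W2]] HR.
  destruct (W1 0%R) as [D1 [D1' E1]]. destruct (W2 0%R) as [D2 [D2' E2]].
  assert (C1 : h1 0%R = 0 * f1 0%R + 1 * Cconj (f1 0%R)).
  { apply (der_comb g1 (cconjf g1) 0%R _ _ 0 1 D1 D1'). intro t. unfold cconjf. destruct (g1 t). unfold Cplus, Cmult, Cconj; simpl. apply injective_projections; simpl; ring. }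
  assert (C2 : h2 0%R = 0 * f2 0%R + 1 * Cconj (f2 0%R)).
  { apply (der_comb g2 (cconjf g2) 0%R _ _ 0 1 D2 D2'). intro t. unfold cconjf. destruct (g2 t). unfold Cplus, Cmult, Cconj; simpl. apply injective_projections; simpl; ring. }
  assert (C3 : f2 0%R = p * f1 0%R + q * Cconj (f1 0%R)).
  { apply (der_comb g1 g2 0%R _ _ p q D1 D2). intro t. rewrite HR. reflexivity. }
  rewrite C2, C3 in E2. unfold cconjf in E2. rewrite HR in E2. rewrite C1 in E1. unfold cconjf in E1, E2.
  clear - Hw E1 E2. subst w.
  destruct (g1 0%R) as [a b], (f1 0%R) as [c d], p as [p1 p2], q as [q1 q2].
  unfold nrm, Cplus, Cmult, Cminus, Copp, Cconj, RtoC in *. simpl in *.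
  injection E2. intros e1 e2.
  assert (Hne : ((b * c - a * d) <> 0)%R).
  { intro Z. apply Hw. apply injective_projections; simpl; nra. }
  apply Rmult_eq_reg_l with (b * c - a * d)%R; [|exact Hne]. nra.
Qed.

Lemma vertex_alg (g1 g2 : R -> C) (T : M2) (Ln Rm : C) :
  (nrm (m11 T) - nrm (m21 T) = 1)%R ->
  (forall x, g2 x = m11 T * g1 x + m21 T * cconjf g1 x /\
             cconjf g2 x = Cconj (m21 T) * g1 x + Cconj (m11 T) * cconjf g1 x) ->
  forall x, g1 x * fst (mulv (Mmap T) (Ln, Rm)) + cconjf g1 x * Rm
          = g2 x * Ln + cconjf g2 x * snd (mulv (Mmap T) (Ln, Rm)).
Proof.
  intros Hd HR x. destruct (HR x) as [R1 R2]. rewrite R1, R2.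
  unfold Mmap, mulv; simpl.
  destruct T as [p t12 q t22]; simpl in *.
  assert (Hpp : p * Cconj p = 1 + q * Cconj q).
  { destruct p, q. unfold nrm in Hd; simpl in Hd. unfold Cmult, Cplus, Cconj, RtoC; simpl. apply injective_projections; simpl; nra. }
  assert (Hpb : Cconj p <> 0).
  { intro Z. destruct p, q. unfold nrm in Hd; simpl in Hd. unfold Cconj, RtoC in Z. injection Z; intros. nra. }
  assert (Ep : p = (1 + q * Cconj q) / Cconj p).
  { rewrite <- Hpp. field. auto. }
  generalize (g1 x) (cconjf g1 x). intros u v.
  set (pb := Cconj p) in *. set (qb := Cconj q) in *. clearbody pb qb. subst p. field. auto.
Qed.

Definition QL (Psi : qw_state) (n : nat) : C := match n with O => qminf Psi | S _ => fst (qv Psi n) end.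
Definition QR (n0 : nat) (Psi : qw_state) (n : nat) : C := if Nat.eqb n n0 then qpinf Psi else snd (qv Psi (S n)).

Lemma qw_tele n0 (T : nat -> M2) (g : nat -> R -> C) Psi :
  (2 <= n0)%nat ->
  (forall n, (1 <= n <= n0)%nat -> (nrm (m11 (T n)) - nrm (m21 (T n)) = 1)%R) ->
  (forall n, (1 <= n <= n0)%nat -> forall x,
     g n x = m11 (T n) * g (n - 1)%nat x + m21 (T n) * cconjf (g (n - 1)%nat) x /\
     cconjf (g n) x = Cconj (m21 (T n)) * g (n - 1)%nat x + Cconj (m11 (T n)) * cconjf (g (n - 1)%nat) x) ->
  qw_fixed n0 (fun n => Mmap (T n)) Psi ->
  forall k, (k <= n0)%nat -> forall x,
    g 0%nat x * QL Psi 0 + cconjf (g 0%nat) x * QR n0 Psi 0 = g k x * QL Psi k + cconjf (g k) x * QR n0 Psi k.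
Proof.
  intros Hn0 Hd HR [Hint [Hm [Hp [H1 Hn]]]] k. induction k as [|k IH]; intros Hk x.
  - reflexivity.
  - rewrite IH by lia.
    assert (Hq : qv Psi (S k) = (QL Psi (S k), QR n0 Psi k)).
    { unfold QL, QR. replace (Nat.eqb k n0) with false by (symmetry; apply Nat.eqb_neq; lia).
      destruct (qv Psi (S k)); reflexivity. }
    assert (V1 : QL Psi k = fst (mulv (Mmap (T (S k))) (qv Psi (S k)))).
    { destruct k as [|k'].
      - simpl. exact Hm.
      - destruct k' as [|k''].
        + simpl QL. rewrite H1 at 1. simpl. apply Cplus_0_r.
        + simpl QL. rewrite (Hint (S (S k''))) at 1 by lia. simpl. apply Cplus_0_r. }
    assert (V2 : QR n0 Psi (S k) = snd (mulv (Mmap (T (S k))) (qv Psi (S k)))).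
    { unfold QR. destruct (Nat.eqb_spec (S k) n0) as [E|E].
      - subst n0. exact Hp.
      - destruct (Nat.eq_dec (S (S k)) n0) as [E2|E2].
        + rewrite <- E2 in Hn. rewrite Hn at 1. simpl. rewrite Cplus_0_l.
          replace (S (S k) - 1)%nat with (S k) by lia. reflexivity.
        + rewrite (Hint (S (S k))) at 1 by lia. simpl. rewrite Cplus_0_l.
          replace (S (S k) - 1)%nat with (S k) by lia. reflexivity. }
    rewrite V1, V2, Hq.
    apply vertex_alg.
    + apply Hd; lia.
    + intro y. pose proof (HR (S k) ltac:(lia) y) as HH. replace (S k - 1)%nat with k in HH by lia. exact HH.
Qed.

Lemma span_conj n0 (T : nat -> M2) (g : nat -> R -> C) :
  (forall n, (1 <= n <= n0)%nat -> (nrm (m11 (T n)) - nrm (m21 (T n)) = 1)%R) ->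
  (forall n, (1 <= n <= n0)%nat -> forall x,
     g n x = m11 (T n) * g (n - 1)%nat x + m21 (T n) * cconjf (g (n - 1)%nat) x /\
     cconjf (g n) x = Cconj (m21 (T n)) * g (n - 1)%nat x + Cconj (m11 (T n)) * cconjf (g (n - 1)%nat) x) ->
  forall k, (k <= n0)%nat -> exists c d, (forall x, cconjf (g k) x = c * g 0%nat x + d * cconjf (g 0%nat) x) /\
     (nrm d - nrm c = 1)%R.
Proof.
  intros Hd HR k. induction k as [|k IH]; intros Hk.
  - exists 0, 1. split.
    + intro x. unfold cconjf. destruct (g 0%nat x). unfold Cplus, Cmult, Cconj, RtoC. simpl. apply injective_projections; simpl; ring.
    + unfold nrm; simpl. ring.
  - destruct (IH ltac:(lia)) as [c [d [E N]]].
    pose proof (Hd (S k) ltac:(lia)) as Dk.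
    set (p := m11 (T (S k))) in *. set (q := m21 (T (S k))) in *.
    exists (Cconj q * Cconj d + Cconj p * c), (Cconj q * Cconj c + Cconj p * d). split.
    + intro x. destruct (HR (S k) ltac:(lia) x) as [_ R2]. replace (S k - 1)%nat with k in R2 by lia.
      fold p q in R2. rewrite R2.
      assert (Eg : g k x = Cconj c * cconjf (g 0%nat) x + Cconj d * g 0%nat x).
      { pose proof (E x) as Ex. unfold cconjf in *. destruct (g k x), (g 0%nat x), c, d.
        unfold Cplus, Cmult, Cconj in *. simpl in *. injection Ex; intros. apply injective_projections; simpl; nra. }
      rewrite Eg, E. unfold cconjf. destruct (g 0%nat x), c, d, p, q.
      unfold Cplus, Cmult, Cconj. simpl. apply injective_projections; simpl; ring.
    + clearbody p q. destruct c as [c1 c2], d as [d1 d2], p as [p1 p2], q as [q1 q2]. unfold nrm in *. unfold Cplus, Cmult, Cconj. simpl in *.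
      transitivity ((p1*p1+p2*p2 - (q1*q1+q2*q2)) * (d1*d1+d2*d2 - (c1*c1+c2*c2)))%R.
      * ring.
      * rewrite N, Dk. ring.
Qed.

Lemma indep_end n0 (T : nat -> M2) (g : nat -> R -> C) :
  (forall n, (1 <= n <= n0)%nat -> (nrm (m11 (T n)) - nrm (m21 (T n)) = 1)%R) ->
  (forall n, (1 <= n <= n0)%nat -> forall x,
     g n x = m11 (T n) * g (n - 1)%nat x + m21 (T n) * cconjf (g (n - 1)%nat) x /\
     cconjf (g n) x = Cconj (m21 (T n)) * g (n - 1)%nat x + Cconj (m11 (T n)) * cconjf (g (n - 1)%nat) x) ->
  lin_indep (g 0%nat) (cconjf (g 0%nat)) ->
  lin_indep (g 0%nat) (cconjf (g n0)).
Proof.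
  intros Hd HR HL a b Hab.
  destruct (span_conj n0 T g Hd HR n0 (le_n _)) as [c [d [E N]]].
  destruct (HL (a + b * c) (b * d)) as [E1 E2].
  { intro x. rewrite <- (Hab x). rewrite E. destruct (g 0%nat x), (cconjf (g 0%nat) x), a, b, c, d.
    unfold Cplus, Cmult. simpl. apply injective_projections; simpl; ring. }
  assert (Hb : b = 0).
  { destruct b, d. unfold nrm in N; simpl in N. unfold Cmult, RtoC in E2. injection E2; intros e1 e2.
    assert (r1 * r1 + r2 * r2 > 0)%R by nra.
    assert (z1 : (r * (r1*r1+r2*r2) = 0)%R) by (replace (r * (r1*r1+r2*r2))%R with (r1 * (r * r1 - r0 * r2) + r2 * (r * r2 + r0 * r1))%R by ring; rewrite e1, e2; ring).
    assert (z2 : (r0 * (r1*r1+r2*r2) = 0)%R) by (replace (r0 * (r1*r1+r2*r2))%R with (r1 * (r * r2 + r0 * r1) - r2 * (r * r1 - r0 * r2))%R by ring; rewrite e1, e2; ring).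
    apply injective_projections; simpl.
    - apply Rmult_eq_reg_r with (r1*r1+r2*r2)%R; lra.
    - apply Rmult_eq_reg_r with (r1*r1+r2*r2)%R; lra. }
  subst b. split; auto. rewrite <- E1. ring.
Qed.

Lemma asym_conj h lam s pl J : jost_asym h lam s pl J -> jost_asym h lam (- s) pl (cconjf J).
Proof.
  unfold jost_asym. intro H. apply filterlim_locally. intro eps.
  generalize (proj1 (filterlim_locally _ _) H eps). apply filter_imp. intros x [B1 B2].
  assert (E : cexpi (- s * sqrt lam * Rabs x / h) * cconjf J x = Cconj (cexpi (s * sqrt lam * Rabs x / h) * J x)).
  { unfold cexpi, cconjf. replace (- s * sqrt lam * Rabs x / h)%R with (- (s * sqrt lam * Rabs x / h))%R by (unfold Rdiv; ring).
    rewrite cos_neg, sin_neg. destruct (J x). unfold Cmult, Cconj. simpl. apply injective_projections; simpl; ring. }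
  rewrite E. revert B1 B2. generalize (cexpi (s * sqrt lam * Rabs x / h) * J x). intros [u v] B1 B2.
  split; unfold ball in *; simpl in *; unfold AbsRing_ball, abs, minus, plus, opp in *; simpl in *.
  - exact B1.
  - replace (- v + - 0)%R with (- (v + - 0))%R by ring. rewrite Rabs_Ropp. exact B2.
Qed.

Lemma jost_uniq_swap h lam pl J1 J2 al be : (0 < h)%R -> (0 < lam)%R ->
  jost_asym h lam (-1) pl J1 -> jost_asym h lam 1 pl J2 ->
  (forall x, J2 x = al * J1 x + be * Cconj (J1 x)) ->
  forall x, J2 x = Cconj (J1 x).
Proof.
  intros Hh Hl H1 H2 E.
  pose proof (asym_conj _ _ _ _ _ H1) as C1. replace (- -1)%R with 1%R in C1 by ring.
  pose proof (asym_conj _ _ _ _ _ H2) as C2.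
  assert (E' : forall x, cconjf J2 x = Cconj al * cconjf J1 x + Cconj be * Cconj (cconjf J1 x)).
  { intro x. unfold cconjf. rewrite E. destruct (J1 x), al, be. unfold Cplus, Cmult, Cconj. simpl.
    apply injective_projections; simpl; ring. }
  pose proof (jost_uniq h lam pl _ _ _ _ Hh Hl C1 C2 E') as U.
  intro x. specialize (U x). unfold cconjf in U. destruct (J2 x), (J1 x). unfold Cconj in *. simpl in *.
  injection U; intros. apply injective_projections; simpl; lra.
Qed.

Theorem mainTheorem3
  (h : R) (V : R -> R) (lam0 lam1 lam : R) (n0 : nat) (xs : nat -> R)
  (Jpin Jmin Jpout Jmout : R -> C) (g : nat -> R -> C) (T : nat -> M2)
  (Sqm Sqw : M2) (Psi_pin Psi_min Psi_pout Psi_mout : qw_state) :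
  (0 < h)%R ->
  (forall x, continuity_pt V x) ->
  (exists Cst eps : R, (0 < Cst)%R /\ (0 < eps)%R /\
     forall x, (Rabs (V x) <= Cst * Rpower (1 + Rabs x) (- 1 - eps))%R) ->
  (0 < lam0)%R -> (lam0 <= lam1)%R -> (lam0 <= lam <= lam1)%R ->
  (* level set {V >= lam0} = union of K_n = [x_{2n-1}, x_{2n}], n = 1..n0 *)
  (2 <= n0)%nat ->
  (forall k, (1 <= k < 2 * n0)%nat -> (xs k < xs (S k))%R) ->
  (forall x, (lam0 <= V x)%R <->
     exists n, (1 <= n <= n0)%nat /\ (xs (2 * n - 1)%nat <= x <= xs (2 * n)%nat)%R) ->
  (* Jost solutions *)
  is_sol h V lam Jpin -> jost_asym h lam 1 true Jpin ->
  is_sol h V lam Jmin -> jost_asym h lam 1 false Jmin ->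
  is_sol h V lam Jpout -> jost_asym h lam (-1) true Jpout ->
  is_sol h V lam Jmout -> jost_asym h lam (-1) false Jmout ->
  (* scattering matrix of QM: (J+in, J-in) = (J-out, J+out) Sqm *)
  (forall x, Jpin x = m11 Sqm * Jmout x + m21 Sqm * Jpout x) ->
  (forall x, Jmin x = m12 Sqm * Jmout x + m22 Sqm * Jpout x) ->
  (* the bases (g_n, conj g_n) *)
  (forall n, (n <= n0)%nat -> sol_basis h V lam (g n) (cconjf (g n))) ->
  g 0%nat = Jmout -> g n0 = Jpin ->
  (exists w : C, forall n, (n <= n0)%nat -> wronskian_is (g n) (cconjf (g n)) w) ->
  (forall n, (1 <= n <= n0)%nat -> lin_indep (g (n - 1)%nat) (cconjf (g n))) ->
  (* transfer matrices: (g_{n-1}, conj g_{n-1}) T_n = (g_n, conj g_n) *)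
  (forall n, (1 <= n <= n0)%nat -> forall x,
     g n x = m11 (T n) * g (n - 1)%nat x + m21 (T n) * cconjf (g (n - 1)%nat) x /\
     cconjf (g n) x = m12 (T n) * g (n - 1)%nat x + m22 (T n) * cconjf (g (n - 1)%nat) x) ->
  (* quantum walk with coins U_n = M(T_n) and its generalized eigenstates *)
  let Uc := fun n => Mmap (T n) in
  qw_fixed n0 Uc Psi_min /\ snd (qv Psi_min 1%nat) = 1 /\ qminf Psi_min = 0 ->
  qw_fixed n0 Uc Psi_mout /\ snd (qv Psi_mout 1%nat) = 0 /\ qminf Psi_mout = 1 ->
  qw_fixed n0 Uc Psi_pin /\ fst (qv Psi_pin n0) = 1 /\ qpinf Psi_pin = 0 ->
  qw_fixed n0 Uc Psi_pout /\ fst (qv Psi_pout n0) = 0 /\ qpinf Psi_pout = 1 ->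
  (* scattering matrix of QW: (Psi+in, Psi-in) = (Psi-out, Psi+out) Sqw *)
  qw_lincomb n0 Psi_pin (m11 Sqw) Psi_mout (m21 Sqw) Psi_pout ->
  qw_lincomb n0 Psi_min (m12 Sqw) Psi_mout (m22 Sqw) Psi_pout ->
  Sqm = Sqw.
Proof.
  intros Hh Hcont Hdec Hl0 Hl01 Hlam Hn0 Hxs Hlev Jpin_sol Jpin_as Jmin_sol Jmin_as
    Jpout_sol Jpout_as Jmout_sol Jmout_as Sqm1 Sqm2 Hbasis Hg0 Hgn0 [w Hw] Hli HT Uc
    [Fmin [Mn1 Mn2]] [Fmout [Mo1 Mo2]] [Fpin [Pi1 Pi2]] [Fpout [Po1 Po2]] LC1 LC2.
  assert (Hl : (0 < lam)%R) by lra.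
  assert (HS : forall n, (1 <= n <= n0)%nat -> m12 (T n) = Cconj (m21 (T n)) /\ m22 (T n) = Cconj (m11 (T n))).
  { intros n Hn. destruct (Hbasis (n - 1)%nat ltac:(lia)) as [_ [_ [HLI _]]].
    apply (T_struct (g (n - 1)%nat) (g n)); auto. }
  assert (HR : forall n, (1 <= n <= n0)%nat -> forall x,
     g n x = m11 (T n) * g (n - 1)%nat x + m21 (T n) * cconjf (g (n - 1)%nat) x /\
     cconjf (g n) x = Cconj (m21 (T n)) * g (n - 1)%nat x + Cconj (m11 (T n)) * cconjf (g (n - 1)%nat) x).
  { intros n Hn x. destruct (HS n Hn) as [S1 S2]. rewrite <- S1, <- S2. apply HT; auto. }
  assert (Hw0 : w <> RtoC 0).
  { apply (wr_nonzero h lam (g n0) w Hh Hl). rewrite Hgn0; auto. apply Hw; lia. }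
  assert (Hd : forall n, (1 <= n <= n0)%nat -> (nrm (m11 (T n)) - nrm (m21 (T n)) = 1)%R).
  { intros n Hn. apply (det_one (g (n - 1)%nat) (g n) _ _ w Hw0); [apply Hw; lia | apply Hw; lia |].
    intro x. apply (HR n Hn x). }
  assert (Epout : forall x, Jpout x = Cconj (Jpin x)).
  { destruct (Hbasis n0 (le_n _)) as [_ [_ [_ Sp]]]. destruct (Sp Jpout Jpout_sol) as [a [b E]].
    rewrite Hgn0 in E. apply (jost_uniq h lam true Jpin Jpout a b Hh Hl Jpin_as Jpout_as). exact E. }
  assert (Emin : forall x, Jmin x = Cconj (Jmout x)).
  { destruct (Hbasis 0%nat (Nat.le_0_l _)) as [_ [_ [_ Sp]]]. destruct (Sp Jmin Jmin_sol) as [a [b E]].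
    rewrite Hg0 in E. apply (jost_uniq_swap h lam false Jmout Jmin a b Hh Hl Jmout_as Jmin_as). exact E. }
  assert (QR0 : forall Psi, QR n0 Psi 0 = snd (qv Psi 1)).
  { intro Psi. unfold QR. replace (Nat.eqb 0 n0) with false by (symmetry; apply Nat.eqb_neq; lia). reflexivity. }
  assert (QLn : forall Psi, QL Psi n0 = fst (qv Psi n0)).
  { intro Psi. destruct n0; [lia|]. reflexivity. }
  assert (QRn : forall Psi, QR n0 Psi n0 = qpinf Psi).
  { intro Psi. unfold QR. rewrite Nat.eqb_refl. reflexivity. }
  assert (Tel : forall Psi, qw_fixed n0 (fun n => Mmap (T n)) Psi -> forall x,
     Jmout x * qminf Psi + Cconj (Jmout x) * snd (qv Psi 1) = Jpin x * fst (qv Psi n0) + Jpout x * qpinf Psi).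
  { intros Psi F x. pose proof (qw_tele n0 T g Psi Hn0 Hd HR F n0 (le_n _) x) as E.
    rewrite QR0, QLn, QRn in E. unfold cconjf in E. rewrite Hg0, Hgn0 in E. rewrite Epout. exact E. }
  assert (Epin' : forall x, Jpin x = Jmout x * qminf Psi_pin + Cconj (Jmout x) * snd (qv Psi_pin 1)).
  { intro x. rewrite (Tel Psi_pin Fpin x), Pi1, Pi2. ring. }
  assert (Epout' : forall x, Jpout x = Jmout x * qminf Psi_pout + Cconj (Jmout x) * snd (qv Psi_pout 1)).
  { intro x. rewrite (Tel Psi_pout Fpout x), Po1, Po2. ring. }
  destruct LC1 as [LC1v [LC1m _]]. destruct LC2 as [LC2v [LC2m _]].
  pose proof (LC1v 1%nat ltac:(lia)) as L1. pose proof (LC2v 1%nat ltac:(lia)) as L2.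
  apply (f_equal snd) in L1. apply (f_equal snd) in L2. simpl in L1, L2.
  rewrite Mo1 in L1, L2. rewrite Mo2 in LC1m, LC2m. rewrite Mn1 in L2. rewrite Mn2 in LC2m.
  assert (Q1 : forall x, Jpin x = m11 Sqw * Jmout x + m21 Sqw * Jpout x).
  { intro x. rewrite Epin', Epout', LC1m, L1. ring. }
  assert (Q2 : forall x, Jmin x = m12 Sqw * Jmout x + m22 Sqw * Jpout x).
  { intro x. rewrite Emin, Epout'.
    transitivity (Jmout x * (m12 Sqw * 1 + m22 Sqw * qminf Psi_pout) + Cconj (Jmout x) * (m12 Sqw * 0 + m22 Sqw * snd (qv Psi_pout 1))).
    - rewrite <- LC2m, <- L2. ring.
    - ring. }
  assert (IND : lin_indep Jmout Jpout).
  { intros a b Hab. destruct (Hbasis 0%nat (Nat.le_0_l _)) as [_ [_ [HL0 _]]].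
    apply (indep_end n0 T g Hd HR HL0 a b). intro x. rewrite <- (Hab x).
    rewrite Hg0, Epout. unfold cconjf. rewrite Hgn0. reflexivity. }
  destruct (IND (m11 Sqm - m11 Sqw) (m21 Sqm - m21 Sqw)) as [A1 A2].
  { intro x. transitivity (Jpin x - Jpin x); [|ring].
    rewrite (Sqm1 x) at 1. rewrite Q1. ring. }
  destruct (IND (m12 Sqm - m12 Sqw) (m22 Sqm - m22 Sqw)) as [A3 A4].
  { intro x. transitivity (Jmin x - Jmin x); [|ring].
    rewrite (Sqm2 x) at 1. rewrite Q2. ring. }
  destruct Sqm as [a1 a2 a3 a4], Sqw as [b1 b2 b3 b4]. simpl in *.
  f_equal.
  - rewrite <- (Cplus_0_r b1). rewrite <- A1. ring.
  - rewrite <- (Cplus_0_r b2). rewrite <- A3. ring.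
  - rewrite <- (Cplus_0_r b3). rewrite <- A2. ring.
  - rewrite <- (Cplus_0_r b4). rewrite <- A4. ring.
Qed.
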